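(* Let $(G_1,\prec_1)$ and $(G_2,\prec_2)$ be POP-graphs such that the number of output edges of $G_1$ equals the number of input edges of $G_2$. Then $\prec_2\circ\prec_1$ is a planar order on $G_2\circ G_1$.
   Context: A progressive graph is a finite directed acyclic graph (parallel edges allowed) in which every source and every sink has degree one; degree-one vertices are boundary vertices. An input edge is an edge whose initial vertex is a boundary vertex; an output edge one whose terminal vertex is a boundary vertex. For edges write $e\to e'$ if $e\neq e'$ and there is a directed path whose first edge is $e$ and last edge is $e'$. A planar order on $G$ is a linear order $\prec$ on $E(G)$ such that (P1) $e_1\to e_2$ implies $e_1\prec e_2$; (P2) if $e_1\prec e_2\prec e_3$ and $e_1\to e_3$ then $e_1\to e_2$ or $e_2\to e_3$. A POP-graph is a progressive graph with a planar order. Composition: let $(G_1,\prec_1)$, $(G_2,\prec_2)$ be POP-graphs, $G_1$ with output edges $o_1\prec_1\cdots\prec_1 o_n$ and $G_2$ with input edges $i_1\prec_2\cdots\prec_2 i_n$. The progressive graph $G_2\circ G_1$ is obtained from $G_1\sqcup G_2$ by deleting the sinks of $G_1$, the sources of $G_2$ and the edges $o_k,i_k$, and adding for each $k$ a new edge $\overline{e_k}$ from the initial vertex of $o_k$ to the terminal vertex of $i_k$. Let $Q_1=\{e\in E(G_1): e\prec_1 o_1\}$, $Q_k=\{e: o_{k-1}\prec_1 e\prec_1 o_k\}$ ($2\le k\le n$), $P_k=\{e\in E(G_2): i_k\prec_2 e\prec_2 i_{k+1}\}$ ($1\le k\le n-1$), $P_n=\{e: i_n\prec_2 e\}$. The composition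 $\prec_2\circ\prec_1$ is the linear order on $E(G_2\circ G_1)$ listing $Q_1,\{\overline{e_1}\},P_1,Q_2,\{\overline{e_2}\},P_2,\dots,Q_n,\{\overline{e_n}\},P_n$ consecutively, each $Q_k$ ordered by $\prec_1$ and each $P_k$ by $\prec_2$. *)

(* Defs.v *)
From HB Require Import structures.
From mathcomp Require Import all_boot.
Set Implicit Arguments. Unset Strict Implicit. Unset Printing Implicit Defensive.

Record graph := Graph { V : finType; E : finType; src : E -> V; tgt : E -> V }.

Definition indeg (G : graph) (v : V G) := #|[pred e : E G | tgt e == v]|.
Definition outdeg (G : graph) (v : V G) := #|[pred e : E G | src e == v]|.
Definition deg (G : graph) (v : V G) := indeg v + outdeg v.
Definition is_source (G : graph) (v : V G) := indeg v == 0.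
Definition is_sink (G : graph) (v : V G) := outdeg v == 0.
Definition is_boundary (G : graph) (v : V G) := deg v == 1.
Definition is_input (G : graph) (e : E G) := is_boundary (src e).
Definition is_output (G : graph) (e : E G) := is_boundary (tgt e).

Definition adj (G : graph) : rel (E G) := fun e f => tgt e == src f.
Definition arrow (G : graph) (e f : E G) := (e != f) && connect (@adj G) e f.
Definition acyclic (G : graph) := forall e f : E G, adj e f -> ~~ connect (@adj G) f e.
Definition progressive (G : graph) :=
  acyclic G /\ forall v : V G, is_source v || is_sink v -> deg v = 1.

(* A linear order on E(G) is represented by the list of edges in increasing order. *)
Definition lin_order (G : graph) (s : seq (E G)) := uniq s /\ forall e, e \in s.
Definition prec (T : eqType) (s : seq T) (e f : T) := index e s < index f s.
Definition planar_order (G : graph) (s : seq (E G)) :=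
  [/\ lin_order s,
      (forall e1 e2, arrow e1 e2 -> prec s e1 e2) &
      (forall e1 e2 e3, prec s e1 e2 -> prec s e2 e3 -> arrow e1 e3 ->
          arrow e1 e2 \/ arrow e2 e3)].
Definition POP (G : graph) (s : seq (E G)) := progressive G /\ planar_order s.

Definition outs (G : graph) (s : seq (E G)) := [seq e <- s | is_output e].
Definition ins (G : graph) (s : seq (E G)) := [seq e <- s | is_input e].

Lemma src_not_sink (G : graph) (e : E G) : ~~ is_sink (src e).
Proof. by rewrite /is_sink /outdeg -lt0n; apply/card_gt0P; exists e; rewrite inE. Qed.
Lemma tgt_not_source (G : graph) (e : E G) : ~~ is_source (tgt e).
Proof. by rewrite /is_source /indeg -lt0n; apply/card_gt0P; exists e; rewrite inE. Qed.

Section Composition.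
Variables (G1 G2 : graph) (s1 : seq (E G1)) (s2 : seq (E G2)).
Variable (Heq : size (outs s1) = size (ins s2)).
Local Notation n := (size (outs s1)).

Definition keepv (x : (V G1 + V G2)%type) : bool :=
  match x with
  | inl v => ~~ (is_boundary v && is_sink v)
  | inr v => ~~ (is_boundary v && is_source v)
  end.

Definition compV : finType := {x : (V G1 + V G2)%type | keepv x}.
Definition compE : finType :=
  (({e : E G1 | ~~ is_output e} + {e : E G2 | ~~ is_input e}) + 'I_n)%type.

Definition o_ (k : 'I_n) : E G1 := tnth (in_tuple (outs s1)) k.
Definition i_ (k : 'I_n) : E G2 := tnth (in_tuple (ins s2)) (cast_ord Heq k).

Lemma keep_src1 (e : E G1) : keepv (inl (src e)).
Proof. by rewrite /= (negbTE (src_not_sink e)) andbF. Qed.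
Lemma keep_tgt2 (e : E G2) : keepv (inr (tgt e)).
Proof. by rewrite /= (negbTE (tgt_not_source e)) andbF. Qed.
Lemma keep_tgt1 (e : E G1) : ~~ is_output e -> keepv (inl (tgt e)).
Proof. by move=> h; apply/negP => /andP [hb _]; exact: (negP h hb). Qed.
Lemma keep_src2 (e : E G2) : ~~ is_input e -> keepv (inr (src e)).
Proof. by move=> h; apply/negP => /andP [hb _]; exact: (negP h hb). Qed.

Definition comp_src (x : compE) : compV :=
  match x with
  | inl (inl e) => exist _ (inl (src (val e))) (keep_src1 (val e))
  | inl (inr e) => exist _ (inr (src (val e))) (keep_src2 (valP e))
  | inr k => exist _ (inl (src (o_ k))) (keep_src1 (o_ k))
  end.
Definition comp_tgt (x : compE) : compV :=
  match x with
  | inl (inl e) => exist _ (inl (tgt (val e))) (keep_tgt1 (valP e))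
  | inl (inr e) => exist _ (inr (tgt (val e))) (keep_tgt2 (val e))
  | inr k => exist _ (inr (tgt (i_ k))) (keep_tgt2 (i_ k))
  end.

(* the progressive graph G2 o G1; the new edge \bar{e_k} is [inr k] *)
Definition compose : graph := @Graph compV compE comp_src comp_tgt.

(* Q_k : edges strictly between o_{k-1} and o_k (before o_1 for the first) *)
Definition Qk (k : 'I_n) : seq (E G1) :=
  [seq e <- s1 | ((k == 0 :> nat) || prec s1 (nth (o_ k) (outs s1) k.-1) e)
                 && prec s1 e (o_ k)].
(* P_k : edges strictly between i_k and i_{k+1} (after i_n for the last) *)
Definition Pk (k : 'I_n) : seq (E G2) :=
  [seq e <- s2 | prec s2 (i_ k) e
                 && ((n <= k.+1) || prec s2 e (nth (i_ k) (ins s2) k.+1))].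

Definition emb1 (e : E G1) : option (E compose) :=
  omap (fun x => inl (inl x)) (insub e : option {e : E G1 | ~~ is_output e}).
Definition emb2 (e : E G2) : option (E compose) :=
  omap (fun x => inl (inr x)) (insub e : option {e : E G2 | ~~ is_input e}).

Definition comp_order : seq (E compose) :=
  flatten [seq pmap emb1 (Qk k) ++ (inr k : E compose) :: pmap emb2 (Pk k)
          | k <- enum 'I_n].
End Composition.

(* Main.v *)
Require Import Defs.
From mathcomp Require Import all_boot zify.
Set Implicit Arguments. Unset Strict Implicit. Unset Printing Implicit Defensive.

Definition cnt (T : Type) (p : pred T) (s : seq T) i := count p (take i s).

Lemma cnt_mono (T : Type) (p : pred T) s i j : i <= j -> cnt p s i <= cnt p s j.
Proof. by move=> h; rewrite /cnt -(subnKC h) takeD count_cat leq_addr. Qed.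

Lemma cnt_S (T : Type) (p : pred T) s x0 i :
  i < size s -> cnt p s i.+1 = cnt p s i + p (nth x0 s i).
Proof. by move=> h; rewrite /cnt (take_nth x0 h) -cats1 count_cat /= addn0. Qed.

Lemma cnt_le (T : Type) (p : pred T) s i : cnt p s i <= count p s.
Proof. by rewrite /cnt -{2}(cat_take_drop i s) count_cat leq_addr. Qed.

Lemma GL (T : eqType) (p : pred T) (s : seq T) x0 j : uniq s -> j < count p s ->
  [/\ p (nth x0 (filter p s) j), nth x0 (filter p s) j \in s &
      cnt p s (index (nth x0 (filter p s) j) s) = j].
Proof.
elim: s j => [|a s IH] j //= /andP[ha hu].
case pa: (p a) => /= hj.
  case: j hj => [|j] hj /=; first by rewrite eqxx /cnt take0 pa mem_head.
  have [h1 h2 h3] := IH j hu hj.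
  have hne : a != nth x0 (filter p s) j by apply/eqP => e; rewrite e h2 in ha.
  by rewrite (negbTE hne) in_cons h2 orbT /cnt /= pa -/(cnt p s _) h3.
have [h1 h2 h3] := IH j hu hj.
have hne : a != nth x0 (filter p s) j by apply/eqP => e; rewrite e h1 in pa.
by rewrite (negbTE hne) in_cons h2 orbT /cnt /= pa -/(cnt p s _) h3.
Qed.

Lemma GLlt (T : eqType) (p : pred T) (s : seq T) x0 j i : uniq s -> j < count p s ->
  (index (nth x0 (filter p s) j) s < i) = (j < cnt p s i).
Proof.
move=> hu hj; have [h1 h2 h3] := GL x0 hu hj.
set o := nth x0 (filter p s) j in h1 h2 h3 *.
have hm : index o s < size s by rewrite index_mem.
case: (leqP i (index o s)) => hi.
  by apply/esym/negbTE; rewrite -leqNgt -h3 cnt_mono.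
apply/esym; have := cnt_mono p s hi; rewrite (cnt_S p o hm) nth_index // h1 h3 addn1.
exact.
Qed.

Lemma pw_index (T : eqType) (s : seq T) : uniq s ->
  pairwise (fun a b => index a s < index b s) s.
Proof.
case: s => [//|x0 s'] hu; apply/(pairwiseP x0) => i j hi hj hij.
by rewrite !index_uniq.
Qed.

Lemma idx_key (T : eqType) (key : T -> nat) (s : seq T) :
  pairwise (fun x y => key x < key y) s ->
  forall x y, x \in s -> y \in s -> (index x s < index y s) = (key x < key y).
Proof.
move=> /(pairwiseP _) hp x y hx hy.
have hp' := hp x.
have ix : index x s < size s by rewrite index_mem.
have iy : index y s < size s by rewrite index_mem.
case: (ltngtP (index x s) (index y s)) => h.
- by have := hp' _ _ ix iy h; rewrite !nth_index.
- have := hp' _ _ iy ix h; rewrite !nth_index // => hk.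
  by apply/esym/negbTE; rewrite -leqNgt ltnW.
- have : nth x s (index x s) = nth x s (index y s) by rewrite h.
  by rewrite !nth_index // => ->; rewrite ltnn.
Qed.

Lemma pw_pmap (aT rT : eqType) (f : aT -> option rT) (r' : rel aT) (r : rel rT) s :
  (forall a b x y, f a = Some x -> f b = Some y -> r' a b -> r x y) ->
  pairwise r' s -> pairwise r (pmap f s).
Proof.
move=> H; elim: s => //= a s IH /andP[ha hs].
case fa: (f a) => [x|] /=; last exact: IH.
rewrite IH // andbT; apply/allP => y; rewrite mem_pmap => /mapP[b hb fb].
exact: (H a b x y fa (esym fb) (allP ha b hb)).
Qed.

Lemma reach_end (T : finType) (r : rel T) :
  (forall x y, r x y -> ~~ connect r y x) ->
  forall x, exists2 y, connect r x y & forall z, ~~ r y z.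
Proof.
move=> hac x.
case: (@arg_minnP T x (connect r x) (fun y => #|[pred z | connect r y z]|) (connect0 r x)).
move=> y hxy hmin; exists y => // z; apply/negP => hyz.
have := hmin z (connect_trans hxy (connect1 hyz)).
rewrite leqNgt => /negP; apply; apply: proper_card; apply/properP; split.
  apply/subsetP => w; rewrite !inE => hzw; exact: connect_trans (connect1 hyz) hzw.
by exists y; rewrite !inE ?connect0 //; exact: hac.
Qed.

Lemma reach_start (T : finType) (r : rel T) :
  (forall x y, r x y -> ~~ connect r y x) ->
  forall x, exists2 y, connect r y x & forall z, ~~ r z y.
Proof.
move=> hac x.
have hac' : forall a b, [rel u v | r v u] a b -> ~~ connect [rel u v | r v u] b a.
  by move=> a b /= hab; rewrite (connect_rev r b a) /=; exact: hac.
have [y hxy hy] := reach_end hac' x.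
by exists y; [rewrite (connect_rev r x y) in hxy | move=> z; exact: hy].
Qed.

Lemma pw_pmap_in (aT rT : eqType) (f : aT -> option rT) (r' : rel aT) (r : rel rT) s :
  (forall a b x y, a \in s -> b \in s -> f a = Some x -> f b = Some y -> r' a b -> r x y) ->
  pairwise r' s -> pairwise r (pmap f s).
Proof.
elim: s => //= a s IH H /andP[ha hs].
have H' : forall a0 b x y, a0 \in s -> b \in s -> f a0 = Some x -> f b = Some y -> r' a0 b -> r x y.
  by move=> a0 b x y h1 h2; apply: H; rewrite in_cons ?h1 ?h2 orbT.
case fa: (f a) => [x|] /=; last exact: IH.
rewrite IH // andbT; apply/allP => y; rewrite mem_pmap => /mapP[b hb fb].
apply: (H a b x y) => //; rewrite ?in_cons ?eqxx ?hb ?orbT //; last exact: (allP ha b hb).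
Qed.

Lemma pw_flatten (I : eqType) (T : eqType) (key : T -> nat) (M : nat) (F : I -> seq T)
  (v : I -> nat) (l : seq I) :
  pairwise (fun i j => v i < v j) l ->
  (forall i, pairwise (fun x y => key x < key y) (F i)) ->
  (forall i x, x \in F i -> v i * M <= key x < (v i).+1 * M) ->
  pairwise (fun x y => key x < key y) (flatten (map F l)).
Proof.
move=> hl hF hB; elim: l hl => //= a l IH /andP[ha hl].
rewrite pairwise_cat hF IH //= andbT; apply/allrelP => x y hx /flattenP[s hs hy].
case/mapP: hs => b hb es; subst s.
have hab := allP ha b hb.
have := hB a x hx; have := hB b y hy.
have : (v a).+1 * M <= v b * M by rewrite leq_mul2r hab orbT.
lia.
Qed.

Section GraphFacts.
Variable G : graph.

Lemma adj_not_output (e f : E G) : adj e f -> ~~ is_output e.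
Proof.
rewrite /adj /is_output /is_boundary /deg => /eqP h.
have h1 : 0 < indeg (tgt e) by apply/card_gt0P; exists e; rewrite inE.
have h2 : 0 < outdeg (tgt e) by apply/card_gt0P; exists f; rewrite inE h.
apply/negP => /eqP; lia.
Qed.

Lemma adj_not_input (e f : E G) : adj e f -> ~~ is_input f.
Proof.
rewrite /adj /is_input /is_boundary /deg => /eqP h.
have h1 : 0 < indeg (src f) by apply/card_gt0P; exists e; rewrite inE h.
have h2 : 0 < outdeg (src f) by apply/card_gt0P; exists f; rewrite inE.
apply/negP => /eqP; lia.
Qed.

Lemma output_connect (o f : E G) : is_output o -> connect (@adj G) o f -> f = o.
Proof.
move=> ho /connectP[[|g p]] /=; first by move=> _ ->.
by case/andP=> h _; rewrite (negbTE (adj_not_output h)) in ho.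
Qed.

Lemma input_connect (i f : E G) : is_input i -> connect (@adj G) f i -> f = i.
Proof.
move=> hi /connectP[p]; case/lastP: p => [|p g] /=; first by move=> _ ->.
rewrite rcons_path last_rcons => /andP[_ h] eg; subst g.
by rewrite (negbTE (adj_not_input h)) in hi.
Qed.

Lemma arrow_outF (o f : E G) : is_output o -> arrow o f = false.
Proof.
move=> ho; rewrite /arrow; case h: (connect _ o f); last by rewrite andbF.
by rewrite (output_connect ho h) eqxx.
Qed.

Lemma arrow_inF (i f : E G) : is_input i -> arrow f i = false.
Proof.
move=> hi; rewrite /arrow; case h: (connect _ f i); last by rewrite andbF.
by rewrite (input_connect hi h) eqxx.
Qed.

Lemma exists_output : progressive G -> forall e : E G, ~~ is_output e ->
  exists2 o, is_output o & arrow e o.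
Proof.
case=> hac hdeg e he; have [y hey hy] := reach_end hac e.
have ho : is_output y.
  rewrite /is_output /is_boundary; apply/eqP/hdeg; apply/orP; right.
  rewrite /is_sink /outdeg; apply/eqP/eq_card0 => g; rewrite !inE.
  by apply/negP => /eqP h; have := hy g; rewrite /adj -h eqxx.
exists y => //; rewrite /arrow hey andbT; apply/eqP => h; subst y.
by rewrite ho in he.
Qed.

Lemma exists_input : progressive G -> forall f : E G, ~~ is_input f ->
  exists2 i, is_input i & arrow i f.
Proof.
case=> hac hdeg f hf; have [y hyf hy] := reach_start hac f.
have hi : is_input y.
  rewrite /is_input /is_boundary; apply/eqP/hdeg; apply/orP; left.
  rewrite /is_source /indeg; apply/eqP/eq_card0 => g; rewrite !inE.
  by apply/negP => /eqP h; have := hy g; rewrite /adj h eqxx.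
exists y => //; rewrite /arrow hyf andbT; apply/eqP => h; subst y.
by rewrite hi in hf.
Qed.

End GraphFacts.

Lemma GP1 (T : eqType) (p : pred T) (s : seq T) d k e : uniq s -> k < size (filter p s) ->
  prec s (nth d (filter p s) k) e = (k < cnt p s (index e s)).
Proof. by move=> hu hk; rewrite /prec GLlt // -size_filter. Qed.

Lemma GPmem (T : eqType) (p : pred T) (s : seq T) d k : uniq s -> k < size (filter p s) ->
  [/\ p (nth d (filter p s) k), nth d (filter p s) k \in s &
      cnt p s (index (nth d (filter p s) k) s) = k].
Proof. by move=> hu hk; apply: GL => //; rewrite -size_filter. Qed.

Lemma GP2 (T : eqType) (p : pred T) (s : seq T) d k e : uniq s -> e \in s -> ~~ p e ->
  k < size (filter p s) ->
  prec s e (nth d (filter p s) k) = (cnt p s (index e s) <= k).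
Proof.
move=> hu he hpe hk; have [h1 h2 h3] := GPmem d hu hk.
rewrite leqNgt -(GP1 d) // /prec.
set o := nth d _ k in h1 h2 h3 *.
have hne : index e s != index o s.
  apply/eqP => h; have : nth d s (index e s) = nth d s (index o s) by rewrite h.
  by rewrite !nth_index // => eo; rewrite eo h1 in hpe.
by move: hne; case: (ltngtP (index e s) (index o s)).
Qed.

Lemma GP3 (T : eqType) (p : pred T) (s : seq T) d j k : uniq s ->
  j < size (filter p s) -> k < size (filter p s) ->
  prec s (nth d (filter p s) j) (nth d (filter p s) k) = (j < k).
Proof. by move=> hu hj hk; rewrite GP1 //; case: (GPmem d hu hk) => _ _ ->. Qed.

Lemma lexlt a b r r' M : r < M -> r' < M ->
  (a * M + r < b * M + r') = (a < b) || (a == b) && (r < r').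
Proof.
move=> hr hr'; case: (ltngtP a b) => h /=.
- apply/idP; nia.
- apply/negbTE; rewrite -leqNgt; nia.
- by subst; rewrite ltn_add2l.
Qed.

Section Comp.
Variables (G1 G2 : graph) (s1 : seq (E G1)) (s2 : seq (E G2)).
Hypotheses (H1 : POP s1) (H2 : POP s2).
Variable Heq : size (outs s1) = size (ins s2).
Local Notation n := (size (outs s1)).
Local Notation CG := (compose Heq).

Lemma u1 : uniq s1. Proof. by case: H1 => _ [[]]. Qed.
Lemma m1 e : e \in s1. Proof. by case: H1 => _ [[_ h] _ _]. Qed.
Lemma u2 : uniq s2. Proof. by case: H2 => _ [[]]. Qed.
Lemma m2 e : e \in s2. Proof. by case: H2 => _ [[_ h] _ _]. Qed.
Lemma pr1 : progressive G1. Proof. by case: H1. Qed.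
Lemma pr2 : progressive G2. Proof. by case: H2. Qed.
Lemma pl1a e f : arrow e f -> prec s1 e f. Proof. by case: H1 => _ [_ h _]; apply: h. Qed.
Lemma pl2a e f : arrow e f -> prec s2 e f. Proof. by case: H2 => _ [_ h _]; apply: h. Qed.
Lemma pl1b e1 e2 e3 : prec s1 e1 e2 -> prec s1 e2 e3 -> arrow e1 e3 ->
  arrow e1 e2 \/ arrow e2 e3.
Proof. by case: H1 => _ [_ _ h]; apply: h. Qed.
Lemma pl2b e1 e2 e3 : prec s2 e1 e2 -> prec s2 e2 e3 -> arrow e1 e3 ->
  arrow e1 e2 \/ arrow e2 e3.
Proof. by case: H2 => _ [_ _ h]; apply: h. Qed.

Lemma oE d (k : 'I_n) : o_ k = nth d (outs s1) k.
Proof. by rewrite /o_ (tnth_nth d). Qed.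
Lemma iE d (k : 'I_n) : i_ Heq k = nth d (ins s2) k.
Proof. by rewrite /i_ (tnth_nth d). Qed.
Lemma szi : size (ins s2) = n. Proof. by rewrite Heq. Qed.

Lemma o_out (k : 'I_n) : is_output (o_ k).
Proof. by rewrite (oE (o_ k)); case: (GPmem (o_ k) u1 (ltn_ord k)). Qed.
Lemma i_in (k : 'I_n) : is_input (i_ Heq k).
Proof.
have hk : k < size (ins s2) by rewrite szi.
by rewrite (iE (i_ Heq k)); case: (GPmem (i_ Heq k) u2 hk).
Qed.

Lemma o_inj (j k : 'I_n) : o_ j = o_ k -> j = k.
Proof.
rewrite [o_ j](oE (o_ j)) [o_ k](oE (o_ j)) => /eqP; rewrite nth_uniq ?ltn_ord //; last exact: filter_uniq u1.
by move/eqP/val_inj.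
Qed.
Lemma i_inj (j k : 'I_n) : i_ Heq j = i_ Heq k -> j = k.
Proof.
rewrite [i_ Heq j](iE (i_ Heq j)) [i_ Heq k](iE (i_ Heq j)) => /eqP; rewrite nth_uniq ?szi ?ltn_ord //; last exact: filter_uniq u2.
by move/eqP/val_inj.
Qed.

Lemma out_is_o (o : E G1) : is_output o -> exists k : 'I_n, o = o_ k.
Proof.
move=> ho; have hm : o \in outs s1 by rewrite mem_filter ho m1.
have hk : index o (outs s1) < n by rewrite index_mem.
by exists (Ordinal hk); rewrite (oE o) nth_index.
Qed.
Lemma in_is_i (i : E G2) : is_input i -> exists k : 'I_n, i = i_ Heq k.
Proof.
move=> hi; have hm : i \in ins s2 by rewrite mem_filter hi m2.
have hk : index i (ins s2) < n by rewrite -szi index_mem.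
by exists (Ordinal hk); rewrite (iE i) nth_index.
Qed.

Definition b1 (e : E G1) := cnt (fun e => is_output e) s1 (index e s1).
Definition c2 (f : E G2) := cnt (fun e => is_input e) s2 (index f s2).

Lemma O_AB (u : E G1) (k : 'I_n) : ~~ is_output u -> prec s1 u (o_ k) = (b1 u <= k).
Proof. by move=> hu; rewrite (oE u) GP2 // ?m1 //; exact: u1. Qed.
Lemma O_BA (u : E G1) (k : 'I_n) : prec s1 (o_ k) u = (k < b1 u).
Proof. by rewrite (oE u) GP1 //; exact: u1. Qed.
Lemma O_BB (j k : 'I_n) : prec s1 (o_ j) (o_ k) = (j < k).
Proof. by rewrite [o_ j](oE (o_ j)) [o_ k](oE (o_ j)) GP3 //; exact: u1. Qed.
Lemma O2_BC (v : E G2) (k : 'I_n) : prec s2 (i_ Heq k) v = (k < c2 v).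
Proof. by rewrite (iE v) GP1 ?szi //; exact: u2. Qed.
Lemma O2_CB (v : E G2) (k : 'I_n) : ~~ is_input v -> prec s2 v (i_ Heq k) = (c2 v <= k).
Proof. by move=> hv; rewrite (iE v) GP2 ?szi // ?m2 //; exact: u2. Qed.
Lemma O2_BB (j k : 'I_n) : prec s2 (i_ Heq j) (i_ Heq k) = (j < k).
Proof. by rewrite [i_ Heq j](iE (i_ Heq j)) [i_ Heq k](iE (i_ Heq j)) GP3 ?szi //; exact: u2. Qed.

Lemma c2_le (v : E G2) : c2 v <= n.
Proof. by rewrite /c2 -szi size_filter cnt_le. Qed.

Lemma F1 (u : E G1) : ~~ is_output u -> exists k : 'I_n, val k = b1 u /\ arrow u (o_ k).
Proof.
move=> hu; have [o ho hao] := exists_output pr1 hu.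
have [m hm] := out_is_o ho; subst o.
have hb : b1 u <= m by rewrite -O_AB //; exact: pl1a.
have hbn : b1 u < n by apply: leq_ltn_trans hb _.
exists (Ordinal hbn); split => //.
case: (ltngtP (b1 u) m) hb => // hlt _.
  case: (pl1b (e2 := o_ (Ordinal hbn)) _ _ hao) => //.
  - by rewrite O_AB.
  - by rewrite O_BB.
  - by rewrite arrow_outF // o_out.
have -> : Ordinal hbn = m by apply: val_inj.
done.
Qed.

Lemma c2_pos (v : E G2) : ~~ is_input v -> 0 < c2 v.
Proof.
move=> hv; have [i hi hia] := exists_input pr2 hv.
have [m hm] := in_is_i hi; subst i.
by have := pl2a hia; rewrite O2_BC; case: (c2 v).
Qed.

Lemma F2 (v : E G2) : ~~ is_input v -> exists k : 'I_n, val k = (c2 v).-1 /\ arrow (i_ Heq k) v.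
Proof.
move=> hv; have [i hi hia] := exists_input pr2 hv.
have [m hm] := in_is_i hi; subst i.
have hb : m < c2 v by rewrite -O2_BC; exact: pl2a.
have hbn : (c2 v).-1 < n by have := c2_le v; have := c2_pos hv; lia.
exists (Ordinal hbn); split => //.
case: (ltngtP m (c2 v).-1) => hlt.
- case: (pl2b (e2 := i_ Heq (Ordinal hbn)) _ _ hia) => //.
  + by rewrite O2_BB.
  + by rewrite O2_BC /=; lia.
  + by rewrite arrow_inF // i_in.
- lia.
- by have -> : Ordinal hbn = m by apply: val_inj.
Qed.


Definition phi1 (x : E CG) : option (E G1) :=
  match x with inl (inl u) => Some (sval u) | inl (inr _) => None | inr k => Some (o_ k) end.
Definition phi2 (x : E CG) : option (E G2) :=
  match x with inl (inl _) => None | inl (inr v) => Some (sval v) | inr k => Some (i_ Heq k) end.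

Lemma adjE (x y : E CG) : adj x y =
  match x, y with
  | inl (inl u), inl (inl u') => adj (sval u) (sval u')
  | inl (inl u), inr k => adj (sval u) (o_ k)
  | inr k, inl (inr v) => adj (i_ Heq k) (sval v)
  | inl (inr v), inl (inr v') => adj (sval v) (sval v')
  | _, _ => false
  end.
Proof. by case: x => [[u|v]|k]; case: y => [[u'|v']|k']. Qed.

Definition Rel (x y : E CG) :=
  [\/ exists a b, [/\ phi1 x = Some a, phi1 y = Some b & connect (@adj G1) a b],
      exists a b, [/\ phi2 x = Some a, phi2 y = Some b & connect (@adj G2) a b] |
      exists a b (k : 'I_n), [/\ phi1 x = Some a, phi2 y = Some b,
         connect (@adj G1) a (o_ k) & connect (@adj G2) (i_ Heq k) b]].

Lemma Rel_refl x : Rel x x.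
Proof.
case: x => [[u|v]|k].
- by apply: Or31; exists (sval u), (sval u); split.
- by apply: Or32; exists (sval v), (sval v); split.
- by apply: Or31; exists (o_ k), (o_ k); split.
Qed.

Lemma Rel_step x w z : Rel x w -> adj w z -> Rel x z.
Proof.
rewrite adjE; case: w => [[u|v]|k]; case: z => [[u'|v']|k'] //= hR hadj.
- case: hR => [[a [b [ha [<-] hab]]]|[a [b [_ //]]]|[a [b [m [_ //]]]]].
  by apply: Or31; exists a, (sval u'); split => //; apply: connect_trans hab (connect1 hadj).
- case: hR => [[a [b [ha [<-] hab]]]|[a [b [_ //]]]|[a [b [m [_ //]]]]].
  by apply: Or31; exists a, (o_ k'); split => //; apply: connect_trans hab (connect1 hadj).
- case: hR => [[a [b [_ //]]]|[a [b [ha [<-] hab]]]|[a [b [m [ha [<-] h1 h2]]]]].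
  + by apply: Or32; exists a, (sval v'); split => //; apply: connect_trans hab (connect1 hadj).
  + by apply: Or33; exists a, (sval v'), m; split => //; apply: connect_trans h2 (connect1 hadj).
- case: hR => [[a [b [ha [<-] hab]]]|[a [b [ha [<-] hab]]]|[a [b [m [ha [<-] h1 h2]]]]].
  + by apply: Or33; exists a, (sval v'), k; split => //; exact: connect1.
  + by apply: Or32; exists a, (sval v'); split => //; apply: connect_trans hab (connect1 hadj).
  + by apply: Or33; exists a, (sval v'), m; split => //; apply: connect_trans h2 (connect1 hadj).
Qed.

Lemma Rel_connect x y : connect (@adj CG) x y -> Rel x y.
Proof.
move=> /connectP[p]; elim/last_ind: p y => [|p z IH] y /=; first by move=> _ ->; exact: Rel_refl.
rewrite rcons_path last_rcons => /andP[hp hadj] ->.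
exact: Rel_step (IH _ hp erefl) hadj.
Qed.

Lemma surj1 (a : E G1) : exists x, phi1 x = Some a.
Proof.
case ha: (is_output a).
  by have [k ->] := out_is_o ha; exists (inr k).
by exists (inl (inl (exist _ a (negbT ha)))).
Qed.
Lemma surj2 (a : E G2) : exists x, phi2 x = Some a.
Proof.
case ha: (is_input a).
  by have [k ->] := in_is_i ha; exists (inr k).
by exists (inl (inr (exist _ a (negbT ha)))).
Qed.

Lemma inj1 x y a : phi1 x = Some a -> phi1 y = Some a -> x = y.
Proof.
case: x => [[u|v]|k]; case: y => [[u'|v']|k'] //= [<-].
- by move=> [/val_inj ->].
- by move=> [ho]; have := valP u => /=; rewrite -ho o_out.
- by move=> [ho]; have := valP u' => /=; rewrite ho o_out.
- by move=> [/o_inj ->].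
Qed.
Lemma inj2 x y a : phi2 x = Some a -> phi2 y = Some a -> x = y.
Proof.
case: x => [[u|v]|k]; case: y => [[u'|v']|k'] //= [<-].
- by move=> [/val_inj ->].
- by move=> [ho]; have := valP v => /=; rewrite -ho i_in.
- by move=> [ho]; have := valP v' => /=; rewrite ho i_in.
- by move=> [/i_inj ->].
Qed.

Lemma adj1c a c x y : adj a c -> phi1 x = Some a -> phi1 y = Some c -> adj x y.
Proof.
move=> hac; rewrite adjE.
case: x => [[u|v]|k]; case: y => [[u'|v']|k'] //= [ea] [ec]; subst a c => //.
- by have := adj_not_output hac; rewrite o_out.
- by have := adj_not_output hac; rewrite o_out.
Qed.
Lemma adj2c a c x y : adj a c -> phi2 x = Some a -> phi2 y = Some c -> adj x y.
Proof.
move=> hac; rewrite adjE.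
case: x => [[u|v]|k]; case: y => [[u'|v']|k'] //= [ea] [ec]; subst a c => //.
- by have := adj_not_input hac; rewrite i_in.
- by have := adj_not_input hac; rewrite i_in.
Qed.

Lemma BW1 a b x y : connect (@adj G1) a b -> phi1 x = Some a -> phi1 y = Some b ->
  connect (@adj CG) x y.
Proof.
move=> /connectP[p hp ->]; elim: p a x hp => [|c p IH] a x /=.
  by move=> _ hx hy; rewrite (inj1 hx hy) connect0.
case/andP => hac hp hx hy; have [z hz] := surj1 c.
exact: connect_trans (connect1 (adj1c hac hx hz)) (IH c z hp hz hy).
Qed.
Lemma BW2 a b x y : connect (@adj G2) a b -> phi2 x = Some a -> phi2 y = Some b ->
  connect (@adj CG) x y.
Proof.
move=> /connectP[p hp ->]; elim: p a x hp => [|c p IH] a x /=.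
  by move=> _ hx hy; rewrite (inj2 hx hy) connect0.
case/andP => hac hp hx hy; have [z hz] := surj2 c.
exact: connect_trans (connect1 (adj2c hac hx hz)) (IH c z hp hz hy).
Qed.

Local Notation A u := (@inl _ 'I_n (@inl _ {e : E G2 | ~~ is_input e} u) : E CG).
Local Notation C v := (@inl _ 'I_n (@inr {e : E G1 | ~~ is_output e} _ v) : E CG).
Local Notation B k := (@inr ({e : E G1 | ~~ is_output e} + {e : E G2 | ~~ is_input e}) 'I_n k : E CG).

Lemma neq_o (u : {e : E G1 | ~~ is_output e}) (k : 'I_n) : sval u != o_ k.
Proof. by apply/eqP => h; have := valP u => /=; rewrite h o_out. Qed.
Lemma neq_i (v : {e : E G2 | ~~ is_input e}) (k : 'I_n) : i_ Heq k != sval v.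
Proof. by apply/eqP => h; have := valP v => /=; rewrite -h i_in. Qed.

Lemma Ar_AA u u' : arrow (A u) (A u') = arrow (sval u) (sval u').
Proof.
rewrite /arrow; apply/andP/andP => [[hne hc]|[hne hc]]; split.
- by apply: contraNneq hne => /val_inj ->.
- by case: (Rel_connect hc) => [[a [b [[<-] [<-] h]]]|[a [b [//]]]|[a [b [k [_ //]]]]].
- by apply: contraNneq hne => -[->].
- by apply: (BW1 hc).
Qed.

Lemma Ar_AB u k : arrow (A u) (B k) = arrow (sval u) (o_ k).
Proof.
rewrite /arrow neq_o; apply/andP/idP => [[hne hc]|hc].
- case: (Rel_connect hc) => [[a [b [[<-] [<-] h]]]|[a [b [//]]]|[a [b [m [[<-] [hb] h1 h2]]]]] //.
  subst b; have := input_connect (i_in k) h2 => /i_inj hm; by subst m.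
- by split => //; by apply: (BW1 hc).
Qed.

Lemma Ar_AC u v : arrow (A u) (C v) <->
  exists k : 'I_n, arrow (sval u) (o_ k) /\ arrow (i_ Heq k) (sval v).
Proof.
rewrite /arrow; split => [/andP[hne hc]|[k [/andP[_ h1] /andP[_ h2]]]].
- case: (Rel_connect hc) => [[a [b [_ //]]]|[a [b [//]]]|[a [b [m [[<-] [<-] h1 h2]]]]].
  by exists m; rewrite h1 h2 neq_o neq_i.
- apply/andP; split => //.
  have c1 : connect (@adj CG) (A u) (B k) by apply: BW1 h1 _ _.
  have c2 : connect (@adj CG) (B k) (C v) by apply: BW2 h2 _ _.
  exact: connect_trans c1 c2.
Qed.

Lemma Ar_BC k v : arrow (B k) (C v) = arrow (i_ Heq k) (sval v).
Proof.
rewrite /arrow neq_i; apply/andP/idP => [[hne hc]|hc].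
- case: (Rel_connect hc) => [[a [b [_ //]]]|[a [b [[<-] [<-] h]]]|[a [b [m [[<-] [<-] h1 h2]]]]] //.
  have := output_connect (o_out k) h1 => /o_inj hm; by subst m.
- by split => //; by apply: (BW2 hc).
Qed.

Lemma Ar_CC v v' : arrow (C v) (C v') = arrow (sval v) (sval v').
Proof.
rewrite /arrow; apply/andP/andP => [[hne hc]|[hne hc]]; split.
- by apply: contraNneq hne => /val_inj ->.
- by case: (Rel_connect hc) => [[a [b [//]]]|[a [b [[<-] [<-] h]]]|[a [b [k [//]]]]].
- by apply: contraNneq hne => -[->].
- by apply: (BW2 hc).
Qed.

Lemma Ar_BA k u : arrow (B k) (A u) = false.
Proof.
apply/negbTE/andP => -[_ hc].
case: (Rel_connect hc) => [[a [b [[<-] [<-] h]]]|[a [b [_ //]]]|[a [b [m [_ //]]]]].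
by have := output_connect (o_out k) h => /eqP; rewrite (negbTE (neq_o u k)).
Qed.

Lemma Ar_BB j k : arrow (B j) (B k) = false.
Proof.
apply/negbTE/andP => -[hne hc]; move: hne; apply/negP/negPn/eqP; congr inr.
case: (Rel_connect hc) => [[a [b [[<-] [<-] h]]]|[a [b [[<-] [<-] h]]]|[a [b [m [[<-] [<-] h1 h2]]]]].
- by have := output_connect (o_out j) h => /o_inj.
- by have := input_connect (i_in k) h => /i_inj.
- have := output_connect (o_out j) h1 => /o_inj hm; subst m.
  by have := input_connect (i_in k) h2 => /i_inj.
Qed.

Lemma Ar_CA v u : arrow (C v) (A u) = false.
Proof.
apply/negbTE/andP => -[_ hc].
by case: (Rel_connect hc) => [[a [b [//]]]|[a [b [_ //]]]|[a [b [m [//]]]]].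
Qed.

Lemma Ar_CB v k : arrow (C v) (B k) = false.
Proof.
apply/negbTE/andP => -[_ hc].
case: (Rel_connect hc) => [[a [b [//]]]|[a [b [[<-] [<-] h]]]|[a [b [m [//]]]]].
by have := input_connect (i_in k) h => /eqP; rewrite eq_sym (negbTE (neq_i v k)).
Qed.

Definition M := size s1 + size s2 + 2.
Definition key (x : E CG) : nat :=
  match x with
  | inl (inl u) => b1 (sval u) * M + index (sval u) s1
  | inl (inr v) => (c2 (sval v)).-1 * M + (size s1 + (index (sval v) s2).+1)
  | inr k => k * M + size s1
  end.

Lemma idx1 (a : E G1) : index a s1 < size s1. Proof. by rewrite index_mem m1. Qed.
Lemma idx2 (a : E G2) : index a s2 < size s2. Proof. by rewrite index_mem m2. Qed.

Lemma Qblk (k : 'I_n) e : e \in Qk k -> ~~ is_output e -> b1 e = k.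
Proof.
rewrite mem_filter => /andP[/andP[h0 h1] _] ho.
rewrite O_AB // in h1.
case/orP: h0 => [/eqP k0|h0]; first by move: h1; rewrite k0; case: (b1 e).
have hk : k.-1 < size (outs s1) by have := ltn_ord k; lia.
move: h0; rewrite GP1 //; last exact: u1.
rewrite -/(b1 e) => h0; move: h1 h0; have := ltn_ord k; lia.
Qed.

Lemma Pblk (k : 'I_n) e : e \in Pk Heq k -> ~~ is_input e -> c2 e = k.+1.
Proof.
rewrite mem_filter => /andP[/andP[h1 h0] _] hi.
rewrite O2_BC in h1.
case: (leqP n k.+1) => hn.
  by have := c2_le e; move: h1 hn; lia.
rewrite (negbTE (_ : ~~ (n <= k.+1))) /= in h0; last by rewrite -ltnNge.
have hk : k.+1 < size (ins s2) by rewrite szi.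
move: h0; rewrite GP2 //; first (rewrite -/(c2 e) => h0; move: h1 h0; lia).
- exact: u2.
- exact: m2.
Qed.

Lemma b1_lt (e : E G1) : ~~ is_output e -> b1 e < n.
Proof. by move=> he; have [k [hk _]] := F1 he; rewrite -hk ltn_ord. Qed.
Lemma c2_lt (e : E G2) : ~~ is_input e -> (c2 e).-1 < n.
Proof. by move=> he; have [k [hk _]] := F2 he; rewrite -hk ltn_ord. Qed.

Lemma Qmem e (he : ~~ is_output e) : e \in Qk (Ordinal (b1_lt he)).
Proof.
rewrite mem_filter m1 andbT /= O_AB // leqnn andbT.
apply/orP; case: (posnP (b1 e)) => hp; [by left; apply/eqP | right].
have hk : (b1 e).-1 < size (outs s1) by have := b1_lt he; lia.
rewrite GP1 //; last exact: u1.
rewrite -/(b1 e); lia.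
Qed.

Lemma Pmem e (he : ~~ is_input e) : e \in Pk Heq (Ordinal (c2_lt he)).
Proof.
rewrite mem_filter m2 andbT /= O2_BC /=.
have hp := c2_pos he; apply/andP; split; first lia.
case: (leqP n (c2 e).-1.+1) => hn //=.
have hk : (c2 e).-1.+1 < size (ins s2) by rewrite szi.
rewrite GP2 //; first (rewrite -/(c2 e); lia).
- exact: u2.
- exact: m2.
Qed.

Lemma emb1_val u : emb1 Heq (sval u) = Some (A u).
Proof. by rewrite /emb1 valK. Qed.
Lemma emb2_val v : emb2 Heq (sval v) = Some (C v).
Proof. by rewrite /emb2 valK. Qed.
Lemma emb1_Some a x : emb1 Heq a = Some x -> exists u, x = A u /\ sval u = a.
Proof. by rewrite /emb1; case: insubP => [u _ <- /= [<-]|//]; exists u. Qed.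
Lemma emb2_Some a x : emb2 Heq a = Some x -> exists v, x = C v /\ sval v = a.
Proof. by rewrite /emb2; case: insubP => [v _ <- /= [<-]|//]; exists v. Qed.

Lemma M1 x : x \in comp_order Heq.
Proof.
apply/flattenP; case: x => [[u|v]|k].
- exists (pmap (emb1 Heq) (Qk (Ordinal (b1_lt (valP u)))) ++
          (inr (Ordinal (b1_lt (valP u))) : E CG) :: pmap (emb2 Heq) (Pk Heq (Ordinal (b1_lt (valP u))))).
    by apply/mapP; exists (Ordinal (b1_lt (valP u))); rewrite ?mem_enum.
  rewrite mem_cat mem_pmap; apply/orP; left; apply/mapP; exists (sval u); last by rewrite emb1_val.
  exact: Qmem.
- exists (pmap (emb1 Heq) (Qk (Ordinal (c2_lt (valP v)))) ++
          (inr (Ordinal (c2_lt (valP v))) : E CG) :: pmap (emb2 Heq) (Pk Heq (Ordinal (c2_lt (valP v))))).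
    by apply/mapP; exists (Ordinal (c2_lt (valP v))); rewrite ?mem_enum.
  rewrite mem_cat in_cons; apply/orP; right; apply/orP; right; rewrite mem_pmap.
  apply/mapP; exists (sval v); last by rewrite emb2_val.
  exact: Pmem.
- exists (pmap (emb1 Heq) (Qk k) ++ (inr k : E CG) :: pmap (emb2 Heq) (Pk Heq k)).
    by apply/mapP; exists k; rewrite ?mem_enum.
  by rewrite mem_cat in_cons eqxx orbT.
Qed.

Lemma rM0 : size s1 < M. Proof. rewrite /M; lia. Qed.
Lemma rM1 (a : E G1) : index a s1 < M. Proof. have := idx1 a; rewrite /M; lia. Qed.
Lemma rM2 (b : E G2) : size s1 + (index b s2).+1 < M.
Proof. have := idx2 b; rewrite /M; lia. Qed.
Lemma MS (k : nat) : k.+1 * M = k * M + M. Proof. by rewrite mulSn addnC. Qed.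

Lemma keyQ (k : 'I_n) x : x \in pmap (emb1 Heq) (Qk k) -> k * M <= key x < k * M + size s1.
Proof.
rewrite mem_pmap => /mapP[a ha hx]; have [u [-> hu]] := emb1_Some (esym hx); subst a.
rewrite /key (Qblk ha (valP u)); have := idx1 (sval u); lia.
Qed.

Lemma keyP (k : 'I_n) x : x \in pmap (emb2 Heq) (Pk Heq k) -> k * M + size s1 < key x < k.+1 * M.
Proof.
rewrite mem_pmap => /mapP[a ha hx]; have [v [-> hv]] := emb2_Some (esym hx); subst a.
rewrite /key (Pblk ha (valP v)) /= MS; have := rM2 (sval v); lia.
Qed.

Lemma pwF (k : 'I_n) : pairwise (fun x y => key x < key y)
  (pmap (emb1 Heq) (Qk k) ++ (inr k : E CG) :: pmap (emb2 Heq) (Pk Heq k)).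
Proof.
have hkB : key (inr k : E CG) = k * M + size s1 by [].
rewrite pairwise_cat /=; apply/and3P; split.
- apply/allrelP => x y hx; rewrite in_cons => /orP[/eqP ->|hy]; have := keyQ hx.
    by rewrite hkB; lia.
  by have := keyP hy; lia.
- apply: (pw_pmap_in (r' := fun a b => index a s1 < index b s1)).
    move=> a b x y ha hb hx hy hab.
    have [u [-> hu]] := emb1_Some hx; have [u' [-> hu']] := emb1_Some hy; subst a b.
    rewrite /key (Qblk ha (valP u)) (Qblk hb (valP u')); lia.
  exact: pairwise_filter (pw_index u1).
- apply/andP; split.
    by apply/allP => y hy; have := keyP hy; rewrite /= ?hkB; lia.
  apply: (pw_pmap_in (r' := fun a b => index a s2 < index b s2)).
    move=> a b x y ha hb hx hy hab.
    have [v [-> hv]] := emb2_Some hx; have [v' [-> hv']] := emb2_Some hy; subst a b.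
    rewrite /key (Pblk ha (valP v)) (Pblk hb (valP v')); lia.
  exact: pairwise_filter (pw_index u2).
Qed.

Lemma M2 : pairwise (fun x y => key x < key y) (comp_order Heq).
Proof.
rewrite /comp_order; apply: (pw_flatten (v := @nat_of_ord n) (M := M)).
- have := iota_ltn_sorted 0 n; rewrite -val_enum_ord (sorted_pairwise ltn_trans) pairwise_map.
  exact.
- exact: pwF.
- move=> k x; rewrite mem_cat in_cons => /or3P[hx|/eqP->|hx].
  + by have := keyQ hx; rewrite MS; have := rM0; lia.
  + by rewrite /= MS; have := rM0; lia.
  + by have := keyP hx; lia.
Qed.

Lemma PC x y : prec (comp_order Heq) x y = (key x < key y).
Proof. rewrite /prec; apply: (idx_key (key := key)); [exact: M2|exact: M1|exact: M1]. Qed.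

Lemma c2p (v : {e : E G2 | ~~ is_input e}) : 0 < c2 (sval v).
Proof. exact: c2_pos (valP v). Qed.

Lemma K_AA u u' : (key (A u) < key (A u')) = prec s1 (sval u) (sval u').
Proof.
rewrite /key /prec lexlt ?rM1 //.
case: (ltngtP (index (sval u) s1) (index (sval u') s1)) => h.
- have : b1 (sval u) <= b1 (sval u') by apply: cnt_mono; exact: ltnW h.
  lia.
- have : b1 (sval u') <= b1 (sval u) by apply: cnt_mono; exact: ltnW h.
  lia.
- have : b1 (sval u) = b1 (sval u') by rewrite /b1 h.
  lia.
Qed.

Lemma K_CC v v' : (key (C v) < key (C v')) = prec s2 (sval v) (sval v').
Proof.
rewrite /key /prec lexlt ?rM2 //.
case: (ltngtP (index (sval v) s2) (index (sval v') s2)) => h.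
- have : c2 (sval v) <= c2 (sval v') by apply: cnt_mono; exact: ltnW h.
  lia.
- have : c2 (sval v') <= c2 (sval v) by apply: cnt_mono; exact: ltnW h.
  lia.
- have : c2 (sval v) = c2 (sval v') by rewrite /c2 h.
  lia.
Qed.

Lemma K_AB u k : (key (A u) < key (B k)) = (b1 (sval u) <= k).
Proof. rewrite /key lexlt ?rM1 ?rM0 //; have := idx1 (sval u); lia. Qed.
Lemma K_BA k u : (key (B k) < key (A u)) = (k < b1 (sval u)).
Proof. rewrite /key lexlt ?rM1 ?rM0 //; have := idx1 (sval u); lia. Qed.
Lemma K_AC u v : (key (A u) < key (C v)) = (b1 (sval u) < c2 (sval v)).
Proof.
rewrite /key lexlt ?rM1 ?rM2 //; have := idx1 (sval u); have := c2p v; lia.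
Qed.
Lemma K_CA v u : (key (C v) < key (A u)) = (c2 (sval v) <= b1 (sval u)).
Proof.
rewrite /key lexlt ?rM1 ?rM2 //; have := idx1 (sval u); have := c2p v; lia.
Qed.
Lemma K_BB j k : (key (B j) < key (B k)) = (j < k).
Proof. rewrite /key lexlt ?rM0 //; lia. Qed.
Lemma K_BC k v : (key (B k) < key (C v)) = (k < c2 (sval v)).
Proof. rewrite /key lexlt ?rM0 ?rM2 //; have := c2p v; lia. Qed.
Lemma K_CB v k : (key (C v) < key (B k)) = (c2 (sval v) <= k).
Proof. rewrite /key lexlt ?rM0 ?rM2 //; have := c2p v; lia. Qed.

Lemma OAB (u : {e : E G1 | ~~ is_output e}) (k : 'I_n) : prec s1 (sval u) (o_ k) = (b1 (sval u) <= k).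
Proof. exact: O_AB (valP u). Qed.
Lemma O2CB (v : {e : E G2 | ~~ is_input e}) (k : 'I_n) : prec s2 (sval v) (i_ Heq k) = (c2 (sval v) <= k).
Proof. exact: O2_CB (valP v). Qed.
Lemma F1' (u : {e : E G1 | ~~ is_output e}) : exists k : 'I_n, (k : nat) = b1 (sval u) /\ arrow (sval u) (o_ k).
Proof. by have [k [hk h]] := F1 (valP u); exists k. Qed.
Lemma F2' (v : {e : E G2 | ~~ is_input e}) : exists k : 'I_n, (k : nat) = (c2 (sval v)).-1 /\ arrow (i_ Heq k) (sval v).
Proof. by have [k [hk h]] := F2 (valP v); exists k. Qed.

Lemma P1c (x y : E CG) : arrow x y -> prec (comp_order Heq) x y.
Proof.
rewrite PC; case: x => [[u|v]|k]; case: y => [[u'|v']|k'].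
- by rewrite Ar_AA K_AA; exact: pl1a.
- case/Ar_AC => k [h1 h2]; rewrite K_AC.
  have := pl1a h1; have := pl2a h2; rewrite OAB O2_BC; lia.
- by rewrite Ar_AB K_AB -OAB; exact: pl1a.
- by rewrite Ar_CA.
- by rewrite Ar_CC K_CC; exact: pl2a.
- by rewrite Ar_CB.
- by rewrite Ar_BA.
- by rewrite Ar_BC K_BC -O2_BC; exact: pl2a.
- by rewrite Ar_BB.
Qed.

Lemma P2c (x y z : E CG) : prec (comp_order Heq) x y -> prec (comp_order Heq) y z ->
  arrow x z -> arrow x y \/ arrow y z.
Proof.
rewrite !PC; case: x => [[u|v]|k]; case: z => [[u''|v'']|k''];
  rewrite ?Ar_BA ?Ar_BB ?Ar_CA ?Ar_CB // => hxy hyz hxz;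
  case: y hxy hyz => [[u'|v']|j] hxy hyz.
- rewrite Ar_AA in hxz; rewrite K_AA in hxy; rewrite K_AA in hyz; rewrite !Ar_AA; exact: pl1b hxy hyz hxz.
- rewrite Ar_AA in hxz; rewrite K_AC in hxy; rewrite K_CA in hyz.
  rewrite Ar_CA; have [j [hj hij]] := F2' v'.
  have p1 : prec s1 (sval u) (o_ j) by rewrite OAB hj; lia.
  have p2 : prec s1 (o_ j) (sval u'') by rewrite O_BA hj; have := c2p v'; lia.
  case: (pl1b p1 p2 hxz) => h; last by rewrite arrow_outF ?o_out in h.
  by left; apply/Ar_AC; exists j.
- rewrite Ar_AA in hxz; rewrite K_AB in hxy; rewrite K_BA in hyz.
  rewrite Ar_AB Ar_BA.
  have p1 : prec s1 (sval u) (o_ j) by rewrite OAB.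
  have p2 : prec s1 (o_ j) (sval u'') by rewrite O_BA.
  case: (pl1b p1 p2 hxz) => h; last by rewrite arrow_outF ?o_out in h.
  by left.
- case/Ar_AC: hxz => k [h1 h2]; rewrite K_AA in hxy; rewrite K_AC in hyz.
  rewrite Ar_AA; case: (leqP (b1 (sval u')) k) => hk.
  + have p2 : prec s1 (sval u') (o_ k) by rewrite OAB.
    case: (pl1b hxy p2 h1) => h; first by left.
    by right; apply/Ar_AC; exists k.
  + have [j [hj hj']] := F1' u'.
    have p1 : prec s2 (i_ Heq k) (i_ Heq j) by rewrite O2_BB hj.
    have p2 : prec s2 (i_ Heq j) (sval v'') by rewrite O2_BC hj.
    case: (pl2b p1 p2 h2) => h; first by rewrite arrow_inF ?i_in in h.
    by right; apply/Ar_AC; exists j.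
- case/Ar_AC: hxz => k [h1 h2]; rewrite K_AC in hxy; rewrite K_CC in hyz.
  rewrite Ar_CC; case: (ltnP k (c2 (sval v'))) => hk.
  + have p1 : prec s2 (i_ Heq k) (sval v') by rewrite O2_BC.
    case: (pl2b p1 hyz h2) => h; last by right.
    by left; apply/Ar_AC; exists k.
  + have [j [hj hj']] := F2' v'.
    have p1 : prec s1 (sval u) (o_ j) by rewrite OAB hj; lia.
    have p2 : prec s1 (o_ j) (o_ k) by rewrite O_BB hj; have := c2p v'; lia.
    case: (pl1b p1 p2 h1) => h; last by rewrite arrow_outF ?o_out in h.
    by left; apply/Ar_AC; exists j.
- case/Ar_AC: hxz => k [h1 h2]; rewrite K_AB in hxy; rewrite K_BC in hyz.
  rewrite Ar_AB Ar_BC; case: (ltngtP j k) => hk.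
  + have p1 : prec s1 (sval u) (o_ j) by rewrite OAB.
    have p2 : prec s1 (o_ j) (o_ k) by rewrite O_BB.
    case: (pl1b p1 p2 h1) => h; last by rewrite arrow_outF ?o_out in h.
    by left.
  + have p1 : prec s2 (i_ Heq k) (i_ Heq j) by rewrite O2_BB.
    have p2 : prec s2 (i_ Heq j) (sval v'') by rewrite O2_BC.
    case: (pl2b p1 p2 h2) => h; first by rewrite arrow_inF ?i_in in h.
    by right.
  + have ejk : j = k by apply: val_inj.
    by subst j; left.
- rewrite Ar_AB in hxz; rewrite K_AA in hxy; rewrite K_AB in hyz.
  rewrite Ar_AA Ar_AB; have p2 : prec s1 (sval u') (o_ k'') by rewrite OAB.
  exact: pl1b hxy p2 hxz.
- rewrite Ar_AB in hxz; rewrite K_AC in hxy; rewrite K_CB in hyz.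
  rewrite Ar_CB; have [j [hj hj']] := F2' v'.
  have p1 : prec s1 (sval u) (o_ j) by rewrite OAB hj; lia.
  have p2 : prec s1 (o_ j) (o_ k'') by rewrite O_BB hj; have := c2p v'; lia.
  case: (pl1b p1 p2 hxz) => h; last by rewrite arrow_outF ?o_out in h.
  by left; apply/Ar_AC; exists j.
- rewrite Ar_AB in hxz; rewrite K_AB in hxy; rewrite K_BB in hyz.
  rewrite Ar_AB Ar_BB; have p1 : prec s1 (sval u) (o_ j) by rewrite OAB.
  have p2 : prec s1 (o_ j) (o_ k'') by rewrite O_BB.
  case: (pl1b p1 p2 hxz) => h; last by rewrite arrow_outF ?o_out in h.
  by left.
- rewrite Ar_CC in hxz; rewrite K_CA in hxy; rewrite K_AC in hyz.
  rewrite Ar_CA; have [j [hj hj']] := F1' u'.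
  have p1 : prec s2 (sval v) (i_ Heq j) by rewrite O2CB hj.
  have p2 : prec s2 (i_ Heq j) (sval v'') by rewrite O2_BC hj.
  case: (pl2b p1 p2 hxz) => h; first by rewrite arrow_inF ?i_in in h.
  by right; apply/Ar_AC; exists j.
- rewrite Ar_CC in hxz; rewrite K_CC in hxy; rewrite K_CC in hyz; rewrite !Ar_CC; exact: pl2b hxy hyz hxz.
- rewrite Ar_CC in hxz; rewrite K_CB in hxy; rewrite K_BC in hyz.
  rewrite Ar_CB Ar_BC.
  have p1 : prec s2 (sval v) (i_ Heq j) by rewrite O2CB.
  have p2 : prec s2 (i_ Heq j) (sval v'') by rewrite O2_BC.
  case: (pl2b p1 p2 hxz) => h; first by rewrite arrow_inF ?i_in in h.
  by right.
- rewrite Ar_BC in hxz; rewrite K_BA in hxy; rewrite K_AC in hyz.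
  rewrite Ar_BA; have [j [hj hj']] := F1' u'.
  have p1 : prec s2 (i_ Heq k) (i_ Heq j) by rewrite O2_BB hj.
  have p2 : prec s2 (i_ Heq j) (sval v'') by rewrite O2_BC hj.
  case: (pl2b p1 p2 hxz) => h; first by rewrite arrow_inF ?i_in in h.
  by right; apply/Ar_AC; exists j.
- rewrite Ar_BC in hxz; rewrite K_BC in hxy; rewrite K_CC in hyz.
  rewrite Ar_BC Ar_CC; have p1 : prec s2 (i_ Heq k) (sval v') by rewrite O2_BC.
  exact: pl2b p1 hyz hxz.
- rewrite Ar_BC in hxz; rewrite K_BB in hxy; rewrite K_BC in hyz.
  rewrite Ar_BB Ar_BC.
  have p1 : prec s2 (i_ Heq k) (i_ Heq j) by rewrite O2_BB.
  have p2 : prec s2 (i_ Heq j) (sval v'') by rewrite O2_BC.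
  case: (pl2b p1 p2 hxz) => h; first by rewrite arrow_inF ?i_in in h.
  by right.
Qed.

End Comp.

Unset Implicit Arguments.

Theorem theorem2p2 (G1 G2 : graph) (s1 : seq (E G1)) (s2 : seq (E G2))
  (H1 : POP s1) (H2 : POP s2) (Heq : size (outs s1) = size (ins s2)) :
  planar_order (comp_order Heq).
Proof.
split.
- split; last exact: M1.
  exact: (pairwise_uniq (fun x => ltnn _) (M2 H1 H2 Heq)).
- exact: P1c.
- exact: P2c.
Qed.
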